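(* If $\mathfrak{F}=(X,R,Q)$ is a finite $\mathsf{MIPC}$-frame, then there is a finite $\mathsf{MS4}$-frame $\mathfrak{G}$ validating $\mathsf{LKur}=\mathsf{MS4}+\Box\forall\Diamond\Box p\to\Diamond\forall p$ such that $\mathfrak{F}$ is isomorphic to the skeleton $\rho\mathfrak{G}$.
   Context: An $\mathsf{MIPC}$-frame is $(X,R,Q)$ with $R$ a partial order, $Q$ a quasi-order, $R\subseteq Q$, and $xQy$ implying $\exists z$ with $xRz$ and $zE_Qy$, where $xE_Qy$ iff $xQy$ and $yQx$. An isomorphism of $\mathsf{MIPC}$-frames is a bijection preserving and reflecting $R$ and $Q$. An $\mathsf{MS4}$-frame is $(Y,R,E)$ with $R$ a quasi-order, $E$ an equivalence relation, such that $xEy$, $yRz$ imply $\exists u$ with $xRu$, $uEz$. $\mathsf{MS4}$ is the smallest set of formulas in the classical bimodal language $\mathcal{L}_{\Box\forall}$ containing all classical tautologies, the $\mathsf{S4}$ axioms for $\Box$, the $\mathsf{S5}$ axioms for $\forall$, and $\Box\forall p\to\forall\Box p$, closed under modus ponens, substitution, $\Box$- and $\forall$-necessitation; $\Diamond=\neg\Box\neg$. Formulas are evaluated on $\mathsf{MS4}$-frames with $\Box$ via $R$ and $\forall$ via $E$. Skeleton of $\mathfrak{G}=(Y,R,E)$: with $xE_Ry$ iff $xRy$ and $yRx$, $X'=Y/E_R$ with quotient map $\pi$; $Q=E\circ R$ ($xQy$ iff $\exists z$: $xRz$, $zEy$); $\rho\mathfrak{G}=(X',R',Q')$ with $\pi(x)R'\pi(y)$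 iff $xRy$ and $\pi(x)Q'\pi(y)$ iff $xQy$. *)

(* Defs.v *)
From mathcomp Require Import all_boot.
Set Implicit Arguments. Unset Strict Implicit. Unset Printing Implicit Defensive.

Inductive form : Type :=
| Var : nat -> form
| Bot : form
| Neg : form -> form
| And : form -> form -> form
| Or  : form -> form -> form
| Imp : form -> form -> form
| Box : form -> form
| All : form -> form.

Definition Dia (a : form) : form := Neg (Box (Neg a)).

Fixpoint subst (s : nat -> form) (a : form) : form :=
  match a with
  | Var n => s n
  | Bot => Bot
  | Neg b => Neg (subst s b)
  | And b c => And (subst s b) (subst s c)
  | Or b c => Or (subst s b) (subst s c)
  | Imp b c => Imp (subst s b) (subst s c)
  | Box b => Box (subst s b)
  | All b => All (subst s b)
  end.

(** classical tautology: true under every boolean valuation of formulas that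
    respects the propositional connectives (modal subformulas behave as atoms) *)
Definition taut (a : form) : Prop :=
  forall v : form -> bool,
    v Bot = false ->
    (forall b, v (Neg b) = ~~ v b) ->
    (forall b c, v (And b c) = v b && v c) ->
    (forall b c, v (Or b c) = v b || v c) ->
    (forall b c, v (Imp b c) = v b ==> v c) ->
    v a = true.

Definition p0 := Var 0.
Definition q0 := Var 1.

Inductive derivable (extra : form -> Prop) : form -> Prop :=
| d_taut a : taut a -> derivable extra a
| d_Kbox : derivable extra (Imp (Box (Imp p0 q0)) (Imp (Box p0) (Box q0)))
| d_Tbox : derivable extra (Imp (Box p0) p0)
| d_4box : derivable extra (Imp (Box p0) (Box (Box p0)))
| d_Kall : derivable extra (Imp (All (Imp p0 q0)) (Imp (All p0) (All q0)))
| d_Tall : derivable extra (Imp (All p0) p0)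
| d_4all : derivable extra (Imp (All p0) (All (All p0)))
| d_5all : derivable extra (Imp (Neg (All p0)) (All (Neg (All p0))))
| d_lc   : derivable extra (Imp (Box (All p0)) (All (Box p0)))
| d_extra a : extra a -> derivable extra a
| d_mp a b : derivable extra (Imp a b) -> derivable extra a -> derivable extra b
| d_subst s a : derivable extra a -> derivable extra (subst s a)
| d_necbox a : derivable extra a -> derivable extra (Box a)
| d_necall a : derivable extra a -> derivable extra (All a).

Definition MS4 : form -> Prop := derivable (fun _ => False).

Definition kur_ax : form := Imp (Box (All (Dia (Box p0)))) (Dia (All p0)).

Definition LKur : form -> Prop := derivable (fun a => a = kur_ax).

Definition MIPC_frame (X : Type) (R Q : X -> X -> bool) : Prop :=
  [/\ (forall x, R x x), (forall x y z, R x y -> R y z -> R x z),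
      (forall x y, R x y -> R y x -> x = y),
      (forall x, Q x x) & (forall x y z, Q x y -> Q y z -> Q x z) ] /\
  (forall x y, R x y -> Q x y) /\
  (forall x y, Q x y -> exists z, R x z /\ Q z y /\ Q y z).

Definition MS4_frame (Y : Type) (R E : Y -> Y -> bool) : Prop :=
  [/\ (forall x, R x x), (forall x y z, R x y -> R y z -> R x z),
      (forall x, E x x), (forall x y, E x y -> E y x) &
      (forall x y z, E x y -> E y z -> E x z) ] /\
  (forall x y z, E x y -> R y z -> exists u, R x u /\ E u z).

Fixpoint eval (Y : Type) (R E : Y -> Y -> bool) (V : nat -> Y -> Prop)
  (a : form) (y : Y) : Prop :=
  match a with
  | Var n => V n y
  | Bot => False
  | Neg b => ~ eval R E V b y
  | And b c => eval R E V b y /\ eval R E V c y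
  | Or b c => eval R E V b y \/ eval R E V c y
  | Imp b c => eval R E V b y -> eval R E V c y
  | Box b => forall z, R y z -> eval R E V b z
  | All b => forall z, E y z -> eval R E V b z
  end.

Definition frame_valid (Y : Type) (R E : Y -> Y -> bool) (a : form) : Prop :=
  forall V y, eval R E V a y.

Definition validates_logic (Y : Type) (R E : Y -> Y -> bool) (L : form -> Prop) :=
  forall a, L a -> frame_valid R E a.

Section Skeleton.
Variables (Y : finType) (R E : rel Y).

Definition ER (x y : Y) : bool := R x y && R y x.
Definition QG (x y : Y) : Prop := exists z, R x z /\ E z y.

Definition skel : Type := {A : {set Y} | exists y, A = [set z | ER y z]}.
Definition pi (y : Y) : skel :=
  exist _ [set z | ER y z] (ex_intro _ y erefl).

Definition skelR (A B : skel) : Prop :=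
  exists x y, A = pi x /\ B = pi y /\ R x y.
Definition skelQ (A B : skel) : Prop :=
  exists x y, A = pi x /\ B = pi y /\ QG x y.
End Skeleton.

(* Main.v *)
Require Import Defs.
From mathcomp Require Import all_boot.
From Stdlib Require Import Classical ClassicalEpsilon ProofIrrelevance.
Set Implicit Arguments. Unset Strict Implicit.


Lemma eval_subst (Y : Type) (R E : Y -> Y -> bool) V s a y :
  eval R E V (subst s a) y <-> eval R E (fun n z => eval R E V (s n) z) a y.
Proof.
elim: a y => [n|| b IH | b IHb c IHc | b IHb c IHc | b IHb c IHc | b IH | b IH] y /=;
 try tauto.
- by rewrite IH.
- by rewrite IHb IHc.
- by rewrite IHb IHc.
- by rewrite IHb IHc.
- split=> H z Hz; [apply/IH|apply/(IH z)]; exact: H.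
- split=> H z Hz; [apply/IH|apply/(IH z)]; exact: H.
Qed.

Lemma taut_sound (Y : Type) (R E : Y -> Y -> bool) V y a :
  taut a -> eval R E V a y.
Proof.
move=> Ht.
pose v b := if excluded_middle_informative (eval R E V b y) then true else false.
have vP b : v b = true <-> eval R E V b y.
  rewrite /v; case: excluded_middle_informative => //.
have: v a = true.
  apply: Ht.
  - by apply/negP => /vP.
  - move=> b; apply/idP/idP.
      by move/vP => /= H; apply/negP => /vP.
    by move/negP => H; apply/vP => /= /vP.
  - move=> b c; apply/idP/idP.
      by move/vP => /= [/vP -> /vP ->].
    by case/andP => /vP H1 /vP H2; apply/vP.
  - move=> b c; apply/idP/idP.
      by move/vP => /= [/vP -> | /vP ->] //; rewrite orbT.
    by case/orP => /vP H; apply/vP; [left|right].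
  - move=> b c; apply/idP/implyP.
      by move/vP => /= H /vP /H /vP.
    move=> H; apply/vP => /= /vP /H /vP //.
by move/vP.
Qed.

Lemma sound (Y : Type) (R E : Y -> Y -> bool) (extra : form -> Prop) :
  MS4_frame R E -> (forall e, extra e -> frame_valid R E e) ->
  forall a, derivable extra a -> frame_valid R E a.
Proof.
move=> [[Rr Rt Er Es Et] lc] Hex a.
elim=> {a} /=.
- move=> a Ht V y; exact: taut_sound.
- move=> V y /= H1 H2 z Hz; exact: (H1 z Hz (H2 z Hz)).
- move=> V y /= H; exact: (H y (Rr y)).
- move=> V y /= H z Hz w Hw; exact: (H w (Rt _ _ _ Hz Hw)).
- move=> V y /= H1 H2 z Hz; exact: (H1 z Hz (H2 z Hz)).
- move=> V y /= H; exact: (H y (Er y)).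
- move=> V y /= H z Hz w Hw; exact: (H w (Et _ _ _ Hz Hw)).
- move=> V y /= H z Hz H2; apply: H => w Hw; apply: H2; exact: (Et _ _ _ (Es _ _ Hz) Hw).
- move=> V y /= H z Hz w Hw; have [u [Hu1 Hu2]] := lc _ _ _ Hz Hw; exact: (H u Hu1 w Hu2).
- move=> a Ha; exact: Hex.
- move=> a b _ H1 _ H2 V y; exact: (H1 V y (H2 V y)).
- move=> s a _ H V y; apply/eval_subst; exact: H.
- move=> a _ H V y z _; exact: H.
- move=> a _ H V y z _; exact: H.
Qed.

Definition maxl (X : finType) (R : rel X) x := [forall y, R x y ==> (y == x)].

Lemma exists_max (X : finType) (R : rel X) :
  (forall x y z, R x y -> R y z -> R x z) -> (forall x y, R x y -> R y x -> x = y) ->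
  (forall x, R x x) ->
  forall w, exists m, R w m && maxl R m.
Proof.
move=> Rt Ra Rr w.
case: (@arg_minnP X w (fun m => R w m) (fun m => #|[set v | R m v]|) (Rr w)) => m Hwm Hmin.
exists m; rewrite Hwm /=; apply/forallP => y; apply/implyP => Hmy.
apply/negPn/negP => Hne.
have Hp : [set v | R y v] \proper [set v | R m v].
  apply/properP; split.
    by apply/subsetP => v; rewrite !inE => Hyv; exact: Rt Hmy Hyv.
  exists m; rewrite !inE ?Rr //; apply/negP => Hym.
  by move/eqP: Hne; apply; apply: Ra.
have := Hmin y (Rt _ _ _ Hwm Hmy).
by rewrite leqNgt (proper_card Hp).
Qed.

Definition EQ (X : finType) (Q : rel X) x y := Q x y && Q y x.
Definition tg (X : finType) (R : rel X) (a : X * bool) := a.2 && maxl R a.1.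
Definition RY (X : finType) (R : rel X) : rel (X * bool) := fun a b => R a.1 b.1.
Definition EY (X : finType) (R Q : rel X) : rel (X * bool) :=
  fun a b => EQ Q a.1 b.1 && (tg R a == tg R b).

Lemma maxQ (X : finType) (R Q : rel X) : MIPC_frame R Q ->
  forall x u, Q x u -> maxl R u -> exists w, [/\ R x w, maxl R w & EQ Q w u].
Proof.
move=> [[Rr Rt Ra Qr Qt] [RQ QR]] x u Hxu Hu.
have [w [Hxw [Hwu Huw]]] := QR _ _ Hxu.
have [m /andP[Hwm Hm]] := exists_max Rt Ra Rr w.
have Hum : Q u m := Qt _ _ _ Huw (RQ _ _ Hwm).
have [v [Huv [Hvm Hmv]]] := QR _ _ Hum.
have ev : v = u by apply/eqP; move/forallP: Hu => /(_ v); rewrite Huv.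
subst v.
exists m; split => //; [exact: Rt Hxw Hwm | by rewrite /EQ Hmv Hum].
Qed.

Lemma ms4 (X : finType) (R Q : rel X) : MIPC_frame R Q -> MS4_frame (RY R) (EY R Q).
Proof.
move=> H; have H' := H; move: H' => [[Rr Rt Ra Qr Qt] [RQ QR]].
split; first split.
- by move=> x; rewrite /RY.
- by move=> x y z; rewrite /RY; apply: Rt.
- by move=> x; rewrite /EY /EQ Qr eqxx.
- move=> x y; rewrite /EY /EQ => /andP[/andP[H1 H2] /eqP H3].
  by rewrite H1 H2 H3 eqxx.
- move=> x y z; rewrite /EY /EQ => /andP[/andP[H1 H2] /eqP ->] /andP[/andP[H3 H4] /eqP ->].
  by rewrite (Qt _ _ _ H1 H3) (Qt _ _ _ H4 H2) eqxx.
move=> [x b] [y c] [z d]; rewrite /EY /RY /EQ /= => /andP[/andP[Hxy Hyx] /eqP Ht] Hyz.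
have Hxz : Q x z := Qt _ _ _ Hxy (RQ _ _ Hyz).
case Hd: (tg R (z, d)).
- move: Hd; rewrite /tg /= => /andP[_ Hz].
  have [w [Hxw Hw /andP[Hwz Hzw]]] := maxQ H Hxz Hz.
  exists (w, true); rewrite /= Hxw Hwz Hzw /tg /= Hw; split => //.
- have [w [Hxw [Hwz Hzw]]] := QR _ _ Hxz.
  exists (w, false); rewrite /= Hxw Hwz Hzw /tg /=; split => //.
Qed.

Lemma kur_valid (X : finType) (R Q : rel X) : MIPC_frame R Q ->
  frame_valid (RY R) (EY R Q) kur_ax.
Proof.
move=> H; have H' := H; move: H' => [[Rr Rt Ra Qr Qt] [RQ QR]].
move=> V [x b] /= Hb Hn.
have [m /andP[Hxm Hm]] := exists_max Rt Ra Rr x.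
apply: (Hn (m, true)); first by rewrite /RY.
move=> [w c] /andP[HE /eqP Hc].
move: Hc; rewrite /tg /= Hm /= => Hc.
have /andP[Hct Hw] : c && maxl R w by rewrite -Hc.
have HEY : EY R Q (m, true) (w, c) by rewrite /EY HE /tg /= Hm -Hc.
have K := Hb (m, true) Hxm (w, c) HEY.
apply: NNPP => HnV; apply: K => [[v e]] Hv Hall; apply: HnV; apply: Hall.
have ev : v = w by apply/eqP; move/forallP: Hw => /(_ v); rewrite /RY /= in Hv; rewrite Hv.
by rewrite /RY /= ev.
Qed.

Lemma sig_eqP (T : Type) (P : T -> Prop) (S S' : T) (p : P S) (q : P S') :
  S = S' -> exist P S p = exist P S' q.
Proof. by move=> e; subst S'; rewrite (proof_irrelevance _ p q). Qed.

Lemma pi_eq (X : finType) (R : rel X) (a b : X * bool) :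
  a.1 = b.1 -> Defs.pi (RY R) a = Defs.pi (RY R) b.
Proof.
move=> e; apply: sig_eqP; apply/setP => z; by rewrite !inE /ER /RY e.
Qed.

Lemma pi_inj (X : finType) (R : rel X) :
  (forall x, R x x) -> (forall x y, R x y -> R y x -> x = y) ->
  forall a b : X * bool, Defs.pi (RY R) a = Defs.pi (RY R) b -> a.1 = b.1.
Proof.
move=> Rr Ra a b /(f_equal (@proj1_sig _ _)) /= /setP /(_ b).
rewrite !inE /ER /RY Rr => /andP[H1 H2]; exact: Ra.
Qed.

Unset Implicit Arguments. Set Strict Implicit.

Theorem lemma5p1 (X : finType) (R Q : rel X) :
  MIPC_frame R Q ->
  exists (Y : finType) (RY EY : rel Y),
    MS4_frame RY EY /\ validates_logic RY EY LKur /\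
    exists f : X -> skel RY,
      bijective f /\
      (forall x x', R x x' <-> @skelR Y RY (f x) (f x')) /\
      (forall x x', Q x x' <-> @skelQ Y RY EY (f x) (f x')).
Proof.
move=> H; have H' := H; move: H' => [[Rr Rt Ra Qr Qt] [RQ QR]].
exists (X * bool)%type, (RY R), (EY R Q).
split; first exact: ms4.
split.
  apply: sound; first exact: ms4.
  by move=> e ->; exact: kur_valid.
exists (fun x => Defs.pi (RY R) (x, false)).
split.
  case: (pickP (fun _ : X => true)) => [x0 _ | X0].
    exists (fun A : skel (RY R) => (odflt (x0, false) [pick z in proj1_sig A]).1).
      move=> x /=; case: pickP => [z|] /=.
        by rewrite !inE /ER /RY /= => /andP[H1 H2]; apply: Ra.
      by move/(_ (x, false)); rewrite !inE /ER /RY Rr.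
    move=> A; case: (proj2_sig A) => y HS.
    have -> : A = Defs.pi (RY R) y by case: A HS => S p /= HS; apply: sig_eqP.
    apply: pi_eq => /=; case: pickP => [z|] /=.
      by rewrite !inE /ER /RY /= => /andP[H1 H2]; apply: Ra.
    by move/(_ y); rewrite !inE /ER /RY Rr.
  have g : skel (RY R) -> X.
    move=> A; exfalso; case: (proj2_sig A) => y _; by have := X0 y.1.
  exists g.
    by move=> x; have := X0 x.
  by move=> A; exfalso; case: (proj2_sig A) => y _; have := X0 y.1.
split=> x x'; split.
- by move=> Hx; exists (x, false), (x', false).
- move=> [a [b [Ha [Hb Hab]]]].
  move: (pi_inj Rr Ra Ha) (pi_inj Rr Ra Hb) => /= -> ->; exact: Hab.
- move=> Hx; exists (x, false), (x', false); split => //; split => //.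
  have [w [Hxw [Hwx Hxw']]] := QR _ _ Hx.
  exists (w, false); split => //.
  by rewrite /EY /EQ /= Hwx Hxw' /tg.
- move=> [a [b [Ha [Hb [z [Haz /andP[/andP[Hzb _] _]]]]]]].
  move: (pi_inj Rr Ra Ha) (pi_inj Rr Ra Hb) => /= -> ->.
  exact: Qt _ _ _ (RQ _ _ Haz) Hzb.
Qed.
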